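(* Let $\mathcal{M}(Y,r)$ be a matroid of rank $k$ on ground set $Y=\{y_1,\dots,y_m\}$, and let $\mathcal{I}_{\mathcal{M}}(Z,\mathcal{R})$ be the corresponding generalized index coding problem (defined in the context). Then $\mathcal{M}$ has a linear representation over $\mathbb{F}_2$ if and only if there exists a perfect scalar linear index code for $\mathcal{I}_{\mathcal{M}}(Z,\mathcal{R})$ over $\mathbb{F}_2$.
   Context: For a matroid $\mathcal{M}$, $\mathcal{B}(\mathcal{M})$ denotes its set of bases and $\mathfrak{C}(\mathcal{M})$ its set of circuits. $\mathcal{M}$ has a linear representation over $\mathbb{F}_2$ if there is a matrix over $\mathbb{F}_2$ with columns indexed by $Y$ such that for every $S\subseteq Y$ the rank of the submatrix of columns indexed by $S$ equals $r(S)$. The problem $\mathcal{I}_{\mathcal{M}}(Z,\mathcal{R})$: messages $Z=Y\cup X$ with $X=\{x_1,\dots,x_k\}$, each message in $\mathbb{F}_2$. Receivers are pairs (demanded message, Has-set); $\mathcal{R}=R_1\cup R_2\cup R_3$ with $R_1=\{(x_i,B): B\in\mathcal{B}(\mathcal{M}), i=1,\dots,k\}$ (the receiver knows the messages in $B$); $R_2=\{(y,\sum_{y_j\in C\setminus\{y\}}y_j): C\in\mathfrak{C}(\mathcal{M}), y\in C\}$ (the receiver knows only the single sum $\sum_{y_j\in C\setminus\{y\}}y_j\in\mathbb{F}_2$); $R_3=\{(y_i,X): i=1,\dots,m\}$ (the receiver knows all of $x_1,\dots,x_k$). A scalar linear index code of length $l$ over $\mathbb{F}_2$ is a linear map $f:\mathbb{F}_2^{m+k}\to\mathbb{F}_2^l$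 applied to the vector of all messages such that each receiver can compute its demanded message from its Has-set and $f$ of the messages. With $\mu$ the maximum number of receivers having the same Has-set, the code is perfect if $l=\mu$. *)

(* Defs.v *)
From mathcomp Require Import all_boot all_order all_algebra.
Set Implicit Arguments. Unset Strict Implicit. Unset Printing Implicit Defensive.
Import GRing.Theory.
Local Open Scope ring_scope.

Definition is_matroid (m : nat) (r : {set 'I_m} -> nat) : Prop :=
  [/\ forall S : {set 'I_m}, (r S <= #|S|)%N,
      forall S T : {set 'I_m}, S \subset T -> (r S <= r T)%N &
      forall S T : {set 'I_m}, (r (S :|: T) + r (S :&: T) <= r S + r T)%N].

Definition independent (m : nat) (r : {set 'I_m} -> nat) (S : {set 'I_m}) : bool :=
  r S == #|S|.

Definition is_basis (m : nat) (r : {set 'I_m} -> nat) (B : {set 'I_m}) : bool :=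
  independent r B && (r B == r setT).

Definition is_circuit (m : nat) (r : {set 'I_m} -> nat) (C : {set 'I_m}) : bool :=
  ~~ independent r C && [forall D : {set 'I_m}, (D \proper C) ==> independent r D].

Definition F2_representable (m : nat) (r : {set 'I_m} -> nat) : Prop :=
  exists (p : nat) (A : 'M['F_2]_(p, m)),
    forall S : {set 'I_m},
      \rank (colsub (fun j : 'I_#|S| => enum_val j) A) = r S.

(* Messages Z = Y u X are indexed by 'I_(m+k): y_j = lshift k j, x_i = rshift m i.
   A Has-set is a pair (b, S): if b = true the receiver knows the individual
   messages indexed by S; if b = false it knows only the single sum of the
   messages indexed by S. A receiver is a pair (demanded message, Has-set). *)
Definition hasset (m k : nat) := (bool * {set 'I_(m + k)})%type.
Definition receiver (m k : nat) := ('I_(m + k) * hasset m k)%type.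

Definition receivers (m k : nat) (r : {set 'I_m} -> nat) : {set receiver m k} :=
  [set rc : receiver m k |
     [exists B : {set 'I_m}, exists i : 'I_k,
        is_basis r B && (rc == (rshift m i, (true, lshift k @: B)))]
  ||
     [exists C : {set 'I_m}, exists y : 'I_m,
        [&& is_circuit r C, y \in C &
            rc == (lshift k y, (false, lshift k @: (C :\ y)))]]
  ||
     [exists j : 'I_m,
        rc == (lshift k j, (true, [set rshift m i | i : 'I_k]))]].

Definition mu (m k : nat) (r : {set 'I_m} -> nat) : nat :=
  \max_(rc in receivers k r)
     #|[set rc' in receivers k r | rc'.2 == rc.2]|.

Definition known (m k : nat) (h : hasset m k) (w : 'rV['F_2]_(m + k))
  : {ffun 'I_(m + k) -> 'F_2} :=
  if h.1 then [ffun z => if z \in h.2 then w 0 z else 0]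
  else [ffun _ => \sum_(z in h.2) w 0 z].

Definition decodes (m k l : nat) (F : 'M['F_2]_(m + k, l)) (rc : receiver m k) : Prop :=
  exists dec : {ffun 'I_(m + k) -> 'F_2} -> 'rV['F_2]_l -> 'F_2,
    forall w : 'rV['F_2]_(m + k), dec (known rc.2 w) (w *m F) = w 0 rc.1.

Definition is_index_code (m k l : nat) (r : {set 'I_m} -> nat) (F : 'M['F_2]_(m + k, l)) : Prop :=
  forall rc, rc \in receivers k r -> decodes F rc.

Definition has_perfect_scalar_linear_code (m k : nat) (r : {set 'I_m} -> nat) : Prop :=
  exists F : 'M['F_2]_(m + k, mu k r), is_index_code r F.

(* Main.v *)
Require Import Defs.
From mathcomp Require Import all_boot all_order all_algebra.
Set Implicit Arguments. Unset Strict Implicit. Unset Printing Implicit Defensive.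
Import GRing.Theory.


Lemma mat_r0 m (r : {set 'I_m} -> nat) : is_matroid r -> r set0 = 0%N.
Proof. by case=> h _ _; apply/eqP; rewrite -leqn0 -(cards0 'I_m) h. Qed.

Lemma mat_mono m (r : {set 'I_m} -> nat) (S T : {set 'I_m}) : is_matroid r -> S \subset T -> (r S <= r T)%N.
Proof. by case=> _ h _; apply: h. Qed.

Lemma mat_add1 m (r : {set 'I_m} -> nat) (S : {set 'I_m}) e : is_matroid r ->
  (r (S :|: [set e]) <= r S + 1)%N.
Proof.
case=> h1 h2 h3; have := h3 S [set e]; have := h1 [set e]; rewrite cards1.
move=> a b; apply: leq_trans (leq_trans (leq_addr _ _) b) _.
by rewrite leq_add2l.
Qed.

Lemma indep_sub m (r : {set 'I_m} -> nat) (I J : {set 'I_m}) : is_matroid r ->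
  independent r I -> J \subset I -> independent r J.
Proof.
move=> hr; case: (hr) => h1 h2 h3 /eqP hI hJI.
have := h3 J (I :\: J).
have -> : J :|: I :\: J = I.
  apply/setP => x; rewrite !inE; case: (boolP (x \in J)) => //= /(subsetP hJI) -> //.
have -> : J :&: (I :\: J) = set0.
  by apply/setP => x; rewrite !inE; case: (x \in J); rewrite ?andbF.
rewrite (mat_r0 hr) addn0 hI.
rewrite -(cardsID J I) (setIidPr hJI) => h.
have := h1 (I :\: J) => h'.
have : (#|J| <= r J)%N.
  by rewrite -(leq_add2r #|I :\: J|); apply: leq_trans h _; rewrite leq_add2l.
by move=> a; rewrite /independent eqn_leq h1 a.
Qed.

Lemma closure_lemma m (r : {set 'I_m} -> nat) (J S : {set 'I_m}) : is_matroid r ->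
  J \subset S -> (forall e, e \in S -> r (J :|: [set e]) = r J) -> r S = r J.
Proof.
move=> hr hJS he.
suff H : forall n (T : {set 'I_m}), #|T| = n -> T \subset S -> r (J :|: T) = r J.
  by rewrite -(H _ S erefl (subxx _)) (setUidPr hJS).
elim=> [|n IH] T hT hTS.
  by move/eqP: hT; rewrite cards_eq0 => /eqP->; rewrite setU0.
have : T != set0 by apply/eqP => h; rewrite h cards0 in hT.
case/set0Pn => e eT.
have hT' : #|T :\ e| = n by rewrite (cardsD1 e T) eT in hT; case: hT.
have IH' := IH _ hT' (subset_trans (subD1set _ _) hTS).
case: (hr) => _ h2 h3.
have := h3 (J :|: T :\ e) (J :|: [set e]).
have -> : J :|: T :\ e :|: (J :|: [set e]) = J :|: T.
  apply/setP => x; rewrite !inE; case: (boolP (x == e)) => [/eqP -> | _]; rewrite ?eT ?orbT //= ?andbT ?orbF;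
  by case: (x \in J); case: (x \in T).
rewrite IH' he ?(subsetP hTS) // => hle.
apply/eqP; rewrite eqn_leq [X in _ && X]h2 ?subsetUl // andbT.
have : (r J <= r ((J :|: T :\ e) :&: (J :|: [set e])))%N.
  by apply: h2; rewrite subsetI !subsetUl.
move=> h4; rewrite -(leq_add2r (r ((J :|: T :\ e) :&: (J :|: [set e])))).
by apply: leq_trans hle _; rewrite leq_add2l.
Qed.

Lemma augment m (r : {set 'I_m} -> nat) (I S : {set 'I_m}) : is_matroid r ->
  independent r I -> I \subset S ->
  exists J, [/\ independent r J, I \subset J, J \subset S & r J = r S].
Proof.
move=> hr.
suff H : forall n (I : {set 'I_m}), (#|S :\: I| <= n)%N -> independent r I -> I \subset S ->
  exists J, [/\ independent r J, I \subset J, J \subset S & r J = r S].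
  by apply: H (leqnn _).
elim=> [|n IH] I0 hn hI hIS.
  exists I0; split => //; apply/esym/(closure_lemma hr hIS) => e eS.
  have eI : e \in I0.
    apply/negPn/negP => eI; move: hn; rewrite leqn0 cards_eq0 => /eqP h.
    by have := in_set0 e; rewrite -h !inE eI eS.
  by rewrite (setUidPl _) // sub1set.
case: (boolP [exists e in S, r (I0 :|: [set e]) != r I0]) => [/existsP[e /andP[eS hne]] | hno].
  have eI : e \notin I0.
    by apply/negP => eI; move: hne; rewrite (setUidPl _) ?sub1set ?eqxx.
  have hind : independent r (I0 :|: [set e]).
    rewrite /independent setUC cardsU1 eI add1n.
    move/eqP: hI => hI.
    have := mat_add1 I0 e hr; rewrite hI addn1 => h1.
    have := mat_mono hr (subsetUl I0 [set e]); rewrite hI => h2.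
    rewrite eqn_leq setUC h1 /=; rewrite ltn_neqAle h2 andbT -hI eq_sym.
    exact: hne.
  have hsub : I0 :|: [set e] \subset S by rewrite subUset hIS sub1set.
  have hn' : (#|S :\: (I0 :|: [set e])| <= n)%N.
    have -> : S :\: (I0 :|: [set e]) = (S :\: I0) :\ e.
      by apply/setP => x; rewrite !inE; case: (x == e); case: (x \in I0); case: (x \in S).
    have : e \in S :\: I0 by rewrite inE eI.
    by move=> eSI; move: hn; rewrite (cardsD1 e (S :\: I0)) eSI add1n.
  have [J [h1 h2 h3 h4]] := IH _ hn' hind hsub.
  by exists J; split => //; apply: subset_trans h2; apply: subsetUl.
exists I0; split => //; apply/esym/(closure_lemma hr hIS) => e eS.
by apply/eqP; move: hno => /existsPn /(_ e); rewrite eS /= negbK.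
Qed.

Lemma circuit_exists m (r : {set 'I_m} -> nat) (I : {set 'I_m}) e : is_matroid r ->
  independent r I -> ~~ independent r (I :|: [set e]) ->
  exists C, [/\ is_circuit r C, e \in C & C \subset I :|: [set e]].
Proof.
move=> hr hI hIe.
pose P := fun D : {set 'I_m} => (D \subset I :|: [set e]) && ~~ independent r D.
have P0 : P (I :|: [set e]) by rewrite /P subxx.
case: (arg_minnP (fun D : {set 'I_m} => #|D|) P0) => C /andP[hCs hCd] hmin.
have hmin' : forall D : {set 'I_m}, D \proper C -> independent r D.
  move=> D hDC; apply/negPn/negP => hD.
  have := hmin D; rewrite /P hD andbT (subset_trans (proper_sub hDC) hCs) => /(_ isT).
  by rewrite leqNgt proper_card.
exists C; split => //.
- by rewrite /is_circuit hCd /=; apply/forallP => D; apply/implyP; apply: hmin'.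
- apply/negPn/negP => eC; move: hCd; rewrite (indep_sub hr hI) //.
  apply/subsetP => x xC; have := subsetP hCs x xC; rewrite !inE.
  by case/orP => // /eqP xe; rewrite -xe xC in eC.
Qed.

Local Open Scope ring_scope.

Definition V (F : fieldType) m n (H : 'M[F]_(m,n)) (S : {set 'I_m}) : 'M[F]_(#|S|, n) :=
  rowsub (fun j : 'I_#|S| => enum_val j) H.

Lemma trmx_colsub (F : fieldType) p m m' (f : 'I_m' -> 'I_m) (A : 'M[F]_(p, m)) :
  (colsub f A)^T = rowsub f A^T.
Proof. by apply/matrixP => i j; rewrite !mxE. Qed.

Lemma V_sub_row (F : fieldType) m n (H : 'M[F]_(m,n)) (S : {set 'I_m}) j :
  j \in S -> (row j H <= V H S)%MS.
Proof.
move=> jS; have := row_sub (enum_rank_in jS j) (V H S).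
by rewrite /V row_rowsub enum_rankK_in.
Qed.

Lemma V_subP (F : fieldType) m n p (H : 'M[F]_(m,n)) (S : {set 'I_m}) (M : 'M[F]_(p,n)) :
  (forall j, j \in S -> (row j H <= M)%MS) -> (V H S <= M)%MS.
Proof.
by move=> h; apply/row_subP => i; rewrite /V row_rowsub; apply: h; apply: enum_valP.
Qed.

Lemma V_mono (F : fieldType) m n (H : 'M[F]_(m,n)) (S T : {set 'I_m}) :
  S \subset T -> (V H S <= V H T)%MS.
Proof. by move=> hST; apply: V_subP => j jS; apply: V_sub_row; apply: (subsetP hST). Qed.

Lemma V_rank_le (F : fieldType) m n (H : 'M[F]_(m,n)) (S : {set 'I_m}) :
  (\rank (V H S) <= #|S|)%N.
Proof. exact: rank_leq_row. Qed.

Lemma V_rankU (F : fieldType) m n (H : 'M[F]_(m,n)) (S T : {set 'I_m}) :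
  (\rank (V H (S :|: T)) <= \rank (V H S) + \rank (V H T))%N.
Proof.
apply: leq_trans (mxrank_adds_leqif (V H S) (V H T)).1.
apply: mxrankS; apply: V_subP => j; rewrite inE => /orP[] h.
  by apply: submx_trans (addsmxSl _ _); apply: V_sub_row.
by apply: submx_trans (addsmxSr _ _); apply: V_sub_row.
Qed.

Lemma main_rank (F : fieldType) m n (r : {set 'I_m} -> nat) (H : 'M[F]_(m,n)) :
  is_matroid r ->
  (forall B, is_basis r B -> \rank (V H B) = #|B|) ->
  (forall C e, is_circuit r C -> e \in C -> (row e H <= V H (C :\ e))%MS) ->
  forall S, \rank (V H S) = r S.
Proof.
move=> hr hB hC S.
have i0 : independent r set0 by rewrite /independent cards0 (mat_r0 hr).
have [J [hJ _ hJS hrJ]] := augment hr i0 (sub0set S).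
have [B [hBi hJB _ hrB]] := augment hr hJ (subsetT J).
have hbas : is_basis r B by rewrite /is_basis hBi hrB eqxx.
have rkJ : \rank (V H J) = #|J|.
  apply/eqP; rewrite eqn_leq V_rank_le /=.
  have eB : B = J :|: (B :\: J).
    apply/setP => x; rewrite !inE; case: (boolP (x \in J)) => //= /(subsetP hJB) -> //.
  have := V_rankU H J (B :\: J); rewrite -eB hB // => h.
  have := V_rank_le H (B :\: J) => h'.
  rewrite -(leq_add2r #|B :\: J|); apply: leq_trans (leq_trans h _).
    by rewrite -(cardsID J B) (setIidPr hJB).
  by rewrite leq_add2l.
have sSJ : (V H S <= V H J)%MS.
  apply: V_subP => e eS.
  case: (boolP (e \in J)) => eJ; first exact: V_sub_row.
  have hdep : ~~ independent r (J :|: [set e]).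
    apply/negP => /eqP hi.
    have := mat_mono hr (_ : J :|: [set e] \subset S).
    rewrite subUset hJS sub1set eS => /(_ isT).
    rewrite hi -hrJ; move/eqP: hJ => ->.
    by rewrite setUC cardsU1 eJ add1n ltnn.
  have [C [hCc eC hCs]] := circuit_exists hr hJ hdep.
  apply: submx_trans (hC C e hCc eC) _; apply: V_mono.
  apply/subsetP => x; rewrite !inE => /andP[xe xC].
  by have := subsetP hCs x xC; rewrite !inE (negbTE xe) orbF.
apply/eqP; rewrite eqn_leq.
rewrite -hrJ; move/eqP: hJ => ->; rewrite -rkJ.
by rewrite mxrankS //= mxrankS // V_mono.
Qed.


Lemma F2_01 (a : 'F_2) : a = 0 \/ a = 1.
Proof. case: a => [[|[|n]]] //= h; [left|right]; exact/val_inj. Qed.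

Lemma F2_add_same (a : 'F_2) : a + a = 0.
Proof. by case: (F2_01 a) => ->; apply/val_inj. Qed.

Lemma mx_add_same m n (A : 'M['F_2]_(m,n)) : A + A = 0.
Proof. by apply/matrixP => i j; rewrite !mxE F2_add_same. Qed.

Lemma F2_opp (a : 'F_2) : - a = a.
Proof. by case: (F2_01 a) => ->; apply/val_inj. Qed.

Lemma circuit_sum m n (r : {set 'I_m} -> nat) (H : 'M['F_2]_(m,n)) :
  is_matroid r -> (forall S, \rank (V H S) = r S) ->
  forall C e, is_circuit r C -> e \in C -> row e H = \sum_(j in C :\ e) row j H.
Proof.
move=> hr hrk C e /andP[hCd /forallP hCi] eC.
have hCe : independent r (C :\ e).
  by have := hCi (C :\ e); rewrite properD1.
have hsub : (row e H <= V H (C :\ e))%MS.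
  have [_ hq] := mxrank_leqif_sup (V_mono H (subD1set C e)).
  have : (V H C <= V H (C :\ e))%MS.
    rewrite -hq eqn_leq mxrankS ?V_mono ?subD1set //= !hrk.
    move/eqP: (hCe) => ->.
    case: hr => h1 _ _; have := h1 C; rewrite (cardsD1 e C) eC add1n.
    rewrite leq_eqVlt ltnS; case/orP => [/eqP h|//]; move: hCd.
    by rewrite /independent (cardsD1 e C) eC add1n h eqxx.
  by apply: submx_trans; apply: V_sub_row.
case/submxP: hsub => v hv.
rewrite /V mulmx_sum_row in hv.
pose D := [set enum_val i | i in [set i | v 0 i == 1]] : {set 'I_m}.
have hDsum : row e H = \sum_(j in D) row j H.
  rewrite hv big_imset /=; last by move=> x y _ _; apply: enum_val_inj.
  rewrite (bigID (fun i => v 0 i == 1)) /= [X in _ + X]big1 ?addr0.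
    by apply: eq_big => [i|i /eqP->]; rewrite ?inE ?row_rowsub ?scale1r.
  by move=> i; case: (F2_01 (v 0 i)) => ->; rewrite ?eqxx ?scale0r.
have hDC : D \subset C :\ e.
  by apply/subsetP => x /imsetP[i _ ->]; apply: enum_valP.
have eD : e \notin D by apply/negP => /(subsetP hDC); rewrite !inE eqxx.
have hdep : ~~ independent r (D :|: [set e]).
  rewrite /independent -(hrk (D :|: [set e])).
  have : (V H (D :|: [set e]) <= V H D)%MS.
    apply: V_subP => j; rewrite !inE => /orP[jD|/eqP->]; first exact: V_sub_row.
    by rewrite hDsum; apply: summx_sub => i iD; apply: V_sub_row.
  move/mxrankS => h; apply: contraTN h => /eqP ->.
  by rewrite setUC cardsU1 eD add1n -ltnNge ltnS V_rank_le.
have hDeC : D :|: [set e] = C.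
  apply/eqP; apply: contraNT hdep => hne.
  have := hCi (D :|: [set e]); rewrite properEneq hne /= subUset sub1set eC andbT.
  by rewrite (subset_trans hDC (subD1set _ _)).
have -> : C :\ e = D.
  rewrite -hDeC; apply/setP => x; rewrite !inE.
  by case: (boolP (x == e)) => [/eqP-> | _] /=; rewrite ?(negbTE eD) ?orbF.
exact: hDsum.
Qed.


Lemma R1_in m k (r : {set 'I_m} -> nat) B i : is_basis r B ->
  (rshift m i, (true, lshift k @: B)) \in receivers k r.
Proof.
move=> hB; rewrite inE; apply/orP; left; apply/orP; left.
by apply/existsP; exists B; apply/existsP; exists i; rewrite hB eqxx.
Qed.

Lemma R2_in m k (r : {set 'I_m} -> nat) C y : is_circuit r C -> y \in C ->
  (lshift k y, (false, lshift k @: (C :\ y))) \in receivers k r.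
Proof.
move=> hC yC; rewrite inE; apply/orP; left; apply/orP; right.
by apply/existsP; exists C; apply/existsP; exists y; rewrite hC yC eqxx.
Qed.

Lemma R3_in m k (r : {set 'I_m} -> nat) j :
  (lshift k j, (true, [set rshift m i | i : 'I_k])) \in receivers k r.
Proof.
by rewrite inE; apply/orP; right; apply/existsP; exists j; rewrite eqxx.
Qed.

Lemma card_fst_bound (T1 T2 : finType) (Sh : {set T1 * T2}) (h : T2) (X : {set T1}) :
  (forall x, x \in Sh -> x.2 = h /\ x.1 \in X) -> (#|Sh| <= #|X|)%N.
Proof.
move=> hS; rewrite -(@card_in_imset _ _ fst Sh).
  by apply: subset_leq_card; apply/subsetP => y /imsetP[x xS ->]; case: (hS x xS).
move=> [a b] [c d] /hS[/= e1 _] /hS[/= e2 _] /= ->.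
by rewrite e1 e2.
Qed.

Lemma lshift_rshift_ne m k (j : 'I_m) (i : 'I_k) : lshift k j != rshift m i.
Proof.
by apply/eqP => /(congr1 val) /= h; have := ltn_ord j; rewrite h ltnNge leq_addr.
Qed.

Lemma mu_eq m k (r : {set 'I_m} -> nat) : is_matroid r -> r setT = k -> mu k r = m.
Proof.
move=> hr hk.
have km : (k <= m)%N.
  by rewrite -hk; case: hr => h1 _ _; have := h1 setT; rewrite cardsT card_ord.
apply/eqP; rewrite eqn_leq; apply/andP; split.
  apply/bigmax_leqP => rc _.
  set Sh := [set rc' in receivers k r | rc'.2 == rc.2].
  case: (boolP [exists rc' in Sh, rc'.1 \notin [set lshift k j | j : 'I_m]]).
    case/existsP => rc0 /andP[]; rewrite inE => /andP[hin /eqP h0] hn0.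
    move: hin; rewrite inE => /orP[/orP[|]|].
    - case/existsP => B /existsP[i] /andP[hB /eqP eq0].
      apply: leq_trans km.
      apply: (@leq_trans #|[set rshift m i0 | i0 : 'I_k]|); last first.
        by rewrite card_imset ?card_ord //; exact: rshift_inj.
      apply: (card_fst_bound (h := rc.2)) => x; rewrite inE => /andP[xin /eqP hx]; split => //.
      move: xin; rewrite inE => /orP[/orP[|]|].
      + by case/existsP => B' /existsP[i'] /andP[_ /eqP->] /=; apply: imset_f.
      + case/existsP => C /existsP[y] /and3P[_ _ /eqP ex].
        by move: hx; rewrite ex -h0 eq0 => -[].
      + case/existsP => j /eqP ex; exfalso.
        move: hx; rewrite ex -h0 eq0 => -[] hs.
        have : rshift m i \in [set rshift m i0 | i0 : 'I_k] by apply: imset_f.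
        rewrite hs => /imsetP[j' _] /eqP; rewrite eq_sym.
        by rewrite (negbTE (lshift_rshift_ne _ _)).
    - case/existsP => C /existsP[y] /and3P[_ _ /eqP ex].
      by move: hn0; rewrite ex /= imset_f.
    - case/existsP => j /eqP ex.
      by move: hn0; rewrite ex /= imset_f.
  move/existsPn => hall.
  apply: (@leq_trans #|[set lshift k j | j : 'I_m]|); last first.
    by rewrite card_imset ?card_ord //; exact: lshift_inj.
  apply: (card_fst_bound (h := rc.2)) => x xS; split.
    by move: xS; rewrite inE => /andP[_ /eqP].
  by have := hall x; rewrite xS /= negbK.
case: m r hr hk km => [|m] r hr hk km //.
have hin := @R3_in m.+1 k r ord0.
apply: leq_trans (leq_bigmax_cond _ hin).
apply: (@leq_trans #|[set (lshift k j, (true, [set rshift m.+1 i | i : 'I_k])) | j : 'I_m.+1]|).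
  rewrite card_imset ?card_ord // => a b /(congr1 (fun p => val p.1)) /= h; exact: val_inj h.
apply: subset_leq_card; apply/subsetP => x /imsetP[j _ ->].
by rewrite inE R3_in /=.
Qed.


Lemma known_sub m k (h : hasset m k) (w w' : 'rV['F_2]_(m + k)) :
  known h w = known h w' -> known h (w - w') = known h 0.
Proof.
case: h => [[] S] /ffunP e; apply/ffunP => z; have := e z; rewrite /known /= !ffunE.
  by case: (z \in S) => //= ez; rewrite !mxE ez subrr.
move=> ez; rewrite (eq_bigr (fun z => w 0 z - w' 0 z)); last by move=> i _; rewrite !mxE.
by rewrite sumrB ez subrr big1 // => i _; rewrite mxE.
Qed.

Lemma decodes_of m k l (F : 'M['F_2]_(m + k, l)) (rc : receiver m k) :
  (forall d : 'rV_(m + k), known rc.2 d = known rc.2 0 -> d *m F = 0 -> d 0 rc.1 = 0) ->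
  decodes F rc.
Proof.
move=> hd.
exists (fun kn c => if [pick w | (known rc.2 w == kn) && (w *m F == c)] is Some w
                   then w 0 rc.1 else 0) => w.
case: pickP => [w' /andP[/eqP e1 /eqP e2] | /(_ w)]; last by rewrite !eqxx.
apply/eqP; rewrite -subr_eq0; apply/eqP.
have := hd (w' - w) (known_sub e1); rewrite mulmxBl e2 subrr !mxE => h.
by rewrite h.

Qed.

Lemma decodes_to m k l (F : 'M['F_2]_(m + k, l)) (rc : receiver m k) :
  decodes F rc ->
  forall d : 'rV_(m + k), known rc.2 d = known rc.2 0 -> d *m F = 0 -> d 0 rc.1 = 0.
Proof.
case=> dec hd d e1 e2; rewrite -(hd d) e1 e2 -(mul0mx _ F) hd mxE //.
Qed.

Lemma known_trueP m k (S : {set 'I_(m + k)}) (d : 'rV['F_2]_(m + k)) :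
  known (true, S) d = known (true, S) 0 <-> (forall z, z \in S -> d 0 z = 0).
Proof.
split.
  move/ffunP => e z zS; have := e z; rewrite !ffunE /= zS => ->; by rewrite mxE.
move=> h; apply/ffunP => z; rewrite !ffunE /=; case: (boolP (z \in S)) => // zS.
by rewrite h // mxE.
Qed.

Lemma known_falseP m k (S : {set 'I_(m + k)}) (d : 'rV['F_2]_(m + k)) (z0 : 'I_(m + k)) :
  known (false, S) d = known (false, S) 0 <-> \sum_(z in S) d 0 z = 0.
Proof.
have s0 : \sum_(z in S) (0 : 'rV['F_2]_(m + k)) 0 z = 0 by rewrite big1 // => i _; rewrite mxE.
split.
  by move/ffunP => /(_ z0); rewrite !ffunE /= s0.
by move=> h; apply/ffunP => z; rewrite !ffunE /= h s0.
Qed.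


Lemma mulmx_entry_row k m (x : 'rV['F_2]_k) (X : 'M['F_2]_(k, m)) j :
  (x *m X) 0 j = (row j X^T *m x^T) 0 0.
Proof. by rewrite !mxE; apply: eq_bigr => i _; rewrite !mxE mulrC. Qed.

Lemma code_of_rep m k (r : {set 'I_m} -> nat) (X : 'M['F_2]_(k, m)) :
  is_matroid r -> r setT = k ->
  (forall S : {set 'I_m}, \rank (colsub (fun j : 'I_#|S| => enum_val j) X) = r S) ->
  has_perfect_scalar_linear_code k r.
Proof.
move=> hr hk hX.
rewrite /has_perfect_scalar_linear_code (mu_eq hr hk).
exists (col_mx 1%:M X) => rc hrc; apply: decodes_of => d hkn hdF.
have hrkV : forall S, \rank (V X^T S) = r S.
  by move=> S; rewrite /V -trmx_colsub mxrank_tr hX.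
have hcs := circuit_sum hr hrkV.
set y := lsubmx d; set x := rsubmx d.
have dE : d = row_mx y x by rewrite hsubmxK.
have hyx : y + x *m X = 0 by rewrite -hdF dE mul_row_col mulmx1.
have yE : forall j, y 0 j = - (x *m X) 0 j.
  move=> j; apply/eqP; rewrite -subr_eq0 opprK; apply/eqP.
  by move/matrixP: hyx => /(_ 0 j); rewrite !mxE.
have dl : forall j, d 0 (lshift k j) = y 0 j by move=> j; rewrite dE row_mxEl.
have dr : forall i, d 0 (rshift m i) = x 0 i by move=> i; rewrite dE row_mxEr.
move: hrc hkn; rewrite inE => /orP[/orP[|]|].
- case/existsP => B /existsP[i] /andP[hB /eqP ->] /= hkn.
  have hz := (known_trueP _ _).1 hkn; rewrite dr.
  have hxB : forall j, j \in B -> (x *m X) 0 j = 0.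
    move=> j jB; apply/eqP; rewrite -oppr_eq0 -yE -dl; apply/eqP.
    by apply: hz; apply: imset_f.
  have hfree : row_free (colsub (fun j : 'I_#|B| => enum_val j) X).
    rewrite /row_free hX; case/andP: hB => _ /eqP ->; by rewrite hk.
  suff -> : x = 0 by rewrite mxE.
  apply/eqP; rewrite -(mulmx_free_eq0 _ hfree) mulmx_colsub; apply/eqP/rowP => j.
  by rewrite mxE [RHS]mxE hxB // enum_valP.
- case/existsP => C /existsP[e] /and3P[hC eC /eqP ->] /= hkn.
  move: ((known_falseP _ _ (lshift k e)).1 hkn).
  rewrite big_imset /=; last by move=> a b _ _; apply: lshift_inj.
  move=> hs; rewrite dl yE mulmx_entry_row (hcs C e hC eC) mulmx_suml summxE.
  apply: etrans hs; rewrite -sumrN; apply: eq_bigr => j _.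
  by rewrite dl yE mulmx_entry_row.
- case/existsP => j /eqP -> /= hkn.
  have hz := (known_trueP _ _).1 hkn.
  have x0 : x = 0.
    by apply/rowP => i; rewrite -dr mxE; apply: hz; apply: imset_f.
  by rewrite dl yE x0 mul0mx !mxE oppr0.
Qed.


Lemma sum_delta k (w : 'rV['F_2]_k) j : \sum_i w 0 i * (i == j)%:R = w 0 j.
Proof.
rewrite (bigD1 j) //= eqxx mulr1 big1 ?addr0 // => i /negbTE ->; by rewrite mulr0.
Qed.

Lemma F2_span k (u v : 'rV['F_2]_k) :
  (forall z : 'rV['F_2]_k, \sum_i u 0 i * z 0 i = 0 -> \sum_i v 0 i * z 0 i = 0) ->
  v = 0 \/ v = u.
Proof.
move=> h.
have E : forall (w : 'rV['F_2]_k) (f : 'I_k -> 'F_2),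
    \sum_i w 0 i * (\row_i f i : 'rV_k) 0 i = \sum_i w 0 i * f i.
  by move=> w f; apply: eq_bigr => i _; rewrite mxE.
case: (boolP (u == 0)) => [/eqP u0 | /rV0Pn [i0 ui0]].
  left; apply/rowP => j; have := h (\row_i (i == j)%:R).
  rewrite !E !sum_delta u0 !mxE => -> //.
have u1 : u 0 i0 = 1 by case: (F2_01 (u 0 i0)) ui0 => -> //; rewrite eqxx.
have hj : forall j, v 0 j = u 0 j * v 0 i0.
  move=> j; have := h (\row_i ((i == j)%:R + u 0 j * (i == i0)%:R)).
  rewrite !E.
  have E2 : forall w : 'rV['F_2]_k, \sum_i w 0 i * ((i == j)%:R + u 0 j * (i == i0)%:R)
       = w 0 j + u 0 j * w 0 i0.
    move=> w; under eq_bigr do rewrite mulrDr mulrCA.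
    by rewrite big_split /= -mulr_sumr !sum_delta.
  rewrite !E2 u1 mulr1 F2_add_same => /(_ erefl) /eqP.
  by rewrite addr_eq0 F2_opp => /eqP.
case: (F2_01 (v 0 i0)) => hv; [left|right]; apply/rowP => j; rewrite hj hv ?mxE ?mulr0 ?mulr1 //.
Qed.

Lemma rep_of_code m k (r : {set 'I_m} -> nat) :
  is_matroid r -> r setT = k -> has_perfect_scalar_linear_code k r -> F2_representable r.
Proof.
move=> hr hk; rewrite /has_perfect_scalar_linear_code (mu_eq hr hk) => -[F hF].
have hdec := fun rc hrc => decodes_to (hF rc hrc).
set FY := usubmx F; set FX := dsubmx F.
have dF : forall (y : 'rV_m) (x : 'rV_k), row_mx y x *m F = y *m FY + x *m FX.
  by move=> y x; rewrite -{1}(vsubmxK F) mul_row_col.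
have hFY : FY \in unitmx.
  rewrite -row_free_unit; apply: inj_row_free => y hy; apply/rowP => j.
  have := hdec _ (@R3_in m k r j) (row_mx y 0).
  rewrite /= row_mxEl mxE; apply.
    apply/(known_trueP _ _) => z /imsetP[i _ ->]; by rewrite row_mxEr mxE.
  by rewrite dF hy mul0mx addr0.
set G := FX *m invmx FY.
pose dz := fun z : 'rV_k => row_mx (z *m G) z.
have dzF : forall z, dz z *m F = 0.
  move=> z; rewrite dF /G -!mulmxA mulVmx // mulmx1; exact: mx_add_same.
have hfree : forall B, is_basis r B -> row_free (colsub (fun j : 'I_#|B| => enum_val j) G).
  move=> B hB; apply: inj_row_free => z hz; apply/rowP => i.
  have := hdec _ (@R1_in m k r B i hB) (dz z).
  rewrite /= row_mxEr mxE; apply; last exact: dzF.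
  apply/(known_trueP _ _) => z' /imsetP[j jB ->]; rewrite row_mxEl.
  move/matrixP: hz => /(_ 0 (enum_rank_in jB j)).
  by rewrite mulmx_colsub !mxE enum_rankK_in.
have hB : forall B, is_basis r B -> \rank (V G^T B) = #|B|.
  move=> B hB; rewrite /V -trmx_colsub mxrank_tr.
  have := hfree B hB; rewrite /row_free => /eqP ->.
  by case/andP: hB => /eqP -> /eqP ->.
have hC : forall C e, is_circuit r C -> e \in C -> (row e G^T <= V G^T (C :\ e))%MS.
  move=> C e hC eC.
  have E : forall (w z : 'rV['F_2]_k), (w *m z^T) 0 0 = \sum_i w 0 i * z 0 i.
    by move=> w z; rewrite mxE; apply: eq_bigr => i _; rewrite mxE.
  have := @F2_span k (\sum_(j in C :\ e) row j G^T) (row e G^T).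
  case.
  - move=> z; rewrite -!E => hu.
    have := hdec _ (@R2_in m k r C e hC eC) (dz z).
    rewrite /= row_mxEl -mulmx_entry_row; apply; last exact: dzF.
    apply/(known_falseP _ _ (lshift k e)).
    rewrite big_imset /=; last by move=> a b _ _; apply: lshift_inj.
    apply: (etrans _ hu); rewrite mulmx_suml summxE; apply: eq_bigr => j _.
    by rewrite row_mxEl mulmx_entry_row.
  - by move=> ->; apply: sub0mx.
  - by move=> ->; apply: summx_sub => j jC; apply: V_sub_row.
have hrk := main_rank hr hB hC.
exists k, G => S; by rewrite -mxrank_tr trmx_colsub hrk.
Qed.


Lemma colsub_mul1 (F : fieldType) p m m' (f : 'I_m' -> 'I_m) (M : 'M[F]_(p, m)) :
  colsub f M = M *m colsub f 1%:M.
Proof. by rewrite mulmx_colsub mulmx1. Qed.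

Unset Implicit Arguments.
Theorem theorem3 (m k : nat) (r : {set 'I_m} -> nat) :
  is_matroid r -> r setT = k ->
  (F2_representable r <-> has_perfect_scalar_linear_code k r).
Proof.
move=> hr hk; split; last exact: rep_of_code.
case=> p [A hA].
have hrkA : \rank A = k.
  rewrite -hk -(hA setT) -[\rank (colsub _ _)]mxrank_tr trmx_colsub -mxrank_tr.
  apply/eqP; rewrite eqn_leq !mxrankS //; first exact: rowsub_sub.
  by apply/row_subP => j; apply: (V_sub_row A^T (in_setT j)).
have hrb : forall S : {set 'I_m},
    \rank (colsub (fun j : 'I_#|S| => enum_val j) (row_base A)) = r S.
  by move=> S; rewrite colsub_mul1 (eqmxMr _ (eq_row_base A)) -colsub_mul1 hA.
move: (row_base A) hrb; rewrite hrkA => X hX.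
exact: code_of_rep hr hk hX.
Qed.
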